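(* Let $\mathcal{M}, \mathcal{L} \in \mathbb{C}^{n\times n}$ and let the matrix pencil $\mathcal{M}-\lambda \mathcal{L}$ have eigenvalues $\lambda_1,\dots,\lambda_k$ satisfying \[ \mathcal{M}v_1 = \lambda_1 \mathcal{L}v_1 ,\ \dots,\ \mathcal{M}v_k = \lambda_k \mathcal{L}v_k \] for some nonzero vectors $v_1,\dots,v_k\in \mathbb{C}^n$. Let $V= [v_1, \dots ,v_k]\in\mathbb{C}^{n\times k}$, $\Lambda=\mathrm{diag}(\lambda_1,\dots,\lambda_k)$ and $\widehat{\Lambda}=\mathrm{diag}(\hat{\lambda}_1,\dots,\hat{\lambda}_k)\in \mathbb{C}^{k\times k}$ for some $\hat{\lambda}_1,\dots,\hat{\lambda}_k \in \mathbb{C}$. If $R_1, R_2\in \mathbb{C}^{n\times k}$ satisfy \[ R_1^{\top}V =\widehat{\Lambda}-\Lambda \quad\text{and}\quad R_2^{\top}V =0, \] then the eigenvalues of the matrix pencil \[ \widehat{\mathcal{M}}-\lambda \widehat{\mathcal{L}} := (\mathcal{M}+\mathcal{L}VR_1^{\top})-\lambda (\mathcal{L}+\mathcal{M}VR_2^{\top}) \] consist of those of $\mathcal{M}-\lambda \mathcal{L}$, except that the eigenvalues $\lambda_1,\dots,\lambda_k$ of $\mathcal{M}-\lambda \mathcal{L}$ are replaced by $\hat{\lambda}_1,\dots,\hat{\lambda}_k$. Moreover, $\hat{\lambda}_1,\dots,\hat{\lambda}_k$ are eigenvalues of $\widehat{\mathcal{M}}-\lambda\widehat{\mathcal{L}}$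 corresponding to the eigenvectors $v_1,\dots,v_k$, respectively, i.e. $\widehat{\mathcal{M}}v_j=\hat{\lambda}_j\widehat{\mathcal{L}}v_j$ for $j=1,\dots,k$.
   Context: For square matrices $\mathcal{M},\mathcal{L}$, a scalar $\mu$ is an eigenvalue of the pencil $\mathcal{M}-\lambda\mathcal{L}$ if $\det(\mathcal{M}-\mu\mathcal{L})=0$, with a corresponding eigenvector being a nonzero $v$ with $\mathcal{M}v=\mu\mathcal{L}v$; eigenvalues are counted with multiplicity as roots of $\det(\mathcal{M}-\lambda\mathcal{L})$. *)

(* Defs.v *)
From HB Require Import structures.
From mathcomp Require Import all_boot all_order all_algebra.
From mathcomp Require Import reals.
From mathcomp Require Export complex.
Set Implicit Arguments. Unset Strict Implicit. Unset Printing Implicit Defensive.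
Import Order.TTheory GRing.Theory Num.Theory.
Local Open Scope ring_scope.

Definition pencil_poly (F : comNzRingType) (n : nat) (M L : 'M[F]_n) : {poly F} :=
  \det (map_mx polyC M - 'X *: map_mx polyC L).

Definition pencil_mult (F : fieldType) (n : nat) (M L : 'M[F]_n) (mu : F) : nat :=
  mup mu (pencil_poly M L).

(* Main.v *)
Require Import Defs.
From HB Require Import structures.
From mathcomp Require Import all_boot all_order all_algebra.
From mathcomp Require Import reals complex.
Import Order.TTheory GRing.Theory Num.Theory.
Local Open Scope ring_scope.

Lemma mup_prod_seq (F : fieldType) (I : Type) (s : seq I) (f : I -> F) x :
  mup x (\prod_(j <- s) ((f j)%:P - 'X)) = count (fun j => f j == x) s.
Proof.
elim: s => [|a s IH]; first by rewrite big_nil mupNroot // root1.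
have hf : (f a)%:P - 'X = -1 * ('X - (f a)%:P) by rewrite mulN1r opprB.
have h0 : (f a)%:P - 'X != 0 by rewrite hf mulN1r oppr_eq0 polyXsubC_eq0.
have hp : \prod_(j <- s) ((f j)%:P - 'X) != 0.
  rewrite prodf_seq_neq0; elim: (s) => [|b t IHt] //=.
  by rewrite IHt andbT -oppr_eq0 opprB polyXsubC_eq0.
rewrite big_cons mupM // IH /= hf mupMr; last by rewrite /root hornerN hornerC oppr_eq0 oner_eq0.
by rewrite -[_ - _]expr1 mup_XsubCX.
Qed.

Lemma mup_prod (F : fieldType) (I : finType) (f : I -> F) x :
  mup x (\prod_(j : I) ((f j)%:P - 'X)) = #|[pred j | f j == x]|.
Proof.
by rewrite mup_prod_seq cardE -deprecated_filter_index_enum size_filter.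
Qed.

Lemma col_mul (F : pzRingType) m n p (A : 'M[F]_(m, n)) (B : 'M[F]_(n, p)) j :
  col j (A *m B) = A *m col j B.
Proof. by rewrite !colE mulmxA. Qed.

Local Open Scope complex_scope.

Theorem theorem6 (R : realType) (n k : nat) (M L : 'M[R[i]]_n)
  (lam lamh : 'I_k -> R[i]) (V R1 R2 : 'M[R[i]]_(n, k)) :
  (forall j : 'I_k, col j V != 0) ->
  (forall j : 'I_k, M *m col j V = lam j *: (L *m col j V)) ->
  R1^T *m V = diag_mx (\row_j lamh j) - diag_mx (\row_j lam j) ->
  R2^T *m V = 0 ->
  let Mh := M + L *m V *m R1^T in
  let Lh := L + M *m V *m R2^T in
  [/\ (* the pencil Mh - lambda Lh is singular iff M - lambda L is *)
      (pencil_poly Mh Lh == 0) = (pencil_poly M L == 0),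
      (* eigenvalues (with multiplicity): those of M - lambda L with
         lam_1..lam_k removed and lamh_1..lamh_k added *)
      (pencil_poly M L != 0 ->
         forall mu : R[i],
           (pencil_mult Mh Lh mu + #|[pred j | lam j == mu]|)%N =
           (pencil_mult M L mu + #|[pred j | lamh j == mu]|)%N)
    & forall j : 'I_k, Mh *m col j V = lamh j *: (Lh *m col j V)].
Proof.
move=> Vnz hcol h1 h2 Mh Lh.
set Lam := diag_mx (\row_j lam j).
set Lamh := diag_mx (\row_j lamh j).
have hMV : M *m V = L *m V *m Lam.
  apply/matrixP => i j; have := congr1 (fun B : 'M[R[i]]_(n,1) => B i 0) (hcol j).
  by rewrite -!col_mul mul_mx_diag !mxE mulrC.
rewrite /pencil_mult /pencil_poly.
set A := (map_mx _ M - _ *: map_mx _ L).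
set Ah := (map_mx _ Mh - _ *: map_mx _ Lh).
pose P := @polyC R[i].
set LV := map_mx P L *m map_mx P V.
set D : 'M_k := map_mx P Lam - 'X%:M.
set E := map_mx P R1^T - 'X *: (map_mx P Lam *m map_mx P R2^T).
have eA : Ah = A + LV *m E.
  rewrite /Ah /Mh /Lh hMV /A /LV /E !map_mxD !map_mxM mulmxBr !scalemxAr !mulmxA.
  rewrite scalerDr opprD addrACA -[in RHS]scalemxAr; reflexivity.
have eAV : A *m map_mx P V = LV *m D.
  by rewrite /A /LV /D mulmxBl -scalemxAl -map_mxM hMV !map_mxM mulmxBr mul_mx_scalar.
have eEV : E *m map_mx P V + D = map_mx P Lamh - 'X%:M.
  rewrite /E /D mulmxBl -scalemxAl -!mulmxA -!map_mxM h2 h1 mulmx0 (map_mx0 _) scaler0 subr0.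
  by rewrite map_mxB addrA subrK.
have hdiag : forall d : 'I_k -> R[i], map_mx P (diag_mx (\row_j d j)) - 'X%:M
     = diag_mx (\row_j ((d j)%:P - 'X)).
  move=> d; apply/matrixP=> i j; rewrite !mxE.
  have [->|ne] := eqVneq i j; rewrite ?eqxx ?(negbTE ne) /= ?mulr1n ?mulr0n ?subr0 ?polyC0 ?mxE //.
set K := block_mx A (- (LV *m D)) E D.
have k1 : block_mx 1%:M LV 0 1%:M *m K = block_mx (A + LV *m E) 0 E D.
  by rewrite /K mulmx_block !mul1mx !mul0mx !add0r addNr.
have k2 : K *m block_mx 1%:M (map_mx P V) 0 1%:M = block_mx A 0 E (E *m map_mx P V + D).
  by rewrite /K mulmx_block !mulmx1 !mulmx0 !addr0 eAV addrN.
have d1 := congr1 determinant k1.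
rewrite det_mulmx det_ublock !det1 !mul1r det_lblock in d1.
have d2 := congr1 determinant k2.
rewrite det_mulmx det_ublock !det1 !mulr1 det_lblock in d2.
rewrite eEV d1 /D !hdiag !det_diag in d2.
have key : \det Ah * \prod_j ((lam j)%:P - 'X)
         = \det A * \prod_j ((lamh j)%:P - 'X).
  have er : forall d : 'I_k -> {poly R[i]}, \prod_i (\row_j d j) 0 i = \prod_j d j.
    by move=> d; apply: eq_bigr => i _; rewrite mxE.
  rewrite !er in d2. by rewrite eA.
have pz : forall d : 'I_k -> R[i], \prod_j ((d j)%:P - 'X) != 0.
  move=> d; apply/prodf_neq0 => j _; by rewrite -oppr_eq0 opprB polyXsubC_eq0.
have e1 : (\det Ah == 0) = (\det A == 0).
  rewrite -[LHS]orbF -(negbTE (pz lam)) -mulf_eq0 key mulf_eq0 (negbTE (pz lamh)) orbF //.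
split => //.
- move=> pn mu; have phn : \det Ah != 0 by rewrite e1.
  have := congr1 (mup mu) key; rewrite !mupM // !mup_prod.
  by [].
- move=> j.
  have eM : Mh *m V = L *m V *m Lamh.
    by rewrite /Mh mulmxDl hMV -[L *m V *m R1^T *m V]mulmxA h1 mulmxBr addrC subrK.
  have eL : Lh *m V = L *m V.
    by rewrite /Lh mulmxDl -!mulmxA h2 !mulmx0 addr0.
  rewrite -!col_mul eM eL; apply/matrixP => i j'; rewrite mul_mx_diag !mxE mulrC //.
Qed.
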